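(* Let $\Sigma$ be a finite totally ordered alphabet, let $W = a_1 a_2 \cdots a_n \in \Sigma^+$, and let $W = L_1 L_2 \cdots L_k$ be its Lyndon factorization. Let $1 \le r \le s \le k$ and let $u = L_r L_{r+1} \cdots L_s$, occupying positions $first(u), \dots, last(u)$ of $W$. Then the sorting of the suffixes of $u$ is compatible with the sorting of the suffixes of $W$; that is, for all indices $i, j$ with $first(u) \le i < j \le last(u)$, $$W[i, last(u)] < W[j, last(u)] \iff W[i,n] < W[j,n],$$ where $<$ denotes the (strict) lexicographic order on $\Sigma^*$.
   Context: For a word $W = a_1\cdots a_n$, $W[i,j] = a_i\cdots a_j$. The lexicographic order on $\Sigma^*$ is the usual one induced by the order of $\Sigma$, in which a proper prefix is smaller than the longer word. Two words $x,y$ are conjugate if $x = pq$, $y = qp$ for some words $p,q$. A Lyndon word is a nonempty primitive word that is strictly smaller (lexicographically) than all its other conjugates. The Lyndon factorization of $W \in \Sigma^+$ is the unique factorization $W = L_1 L_2\cdots L_k$ into Lyndon words with $L_1 \ge L_2 \ge \cdots \ge L_k$ lexicographically. For a factor $u$ of $W$ occurring at a fixed set of positions, $first(u)$ and $last(u)$ denote the positions in $W$ of its first and last letter; $W[i, last(u)]$ is the local suffix of $u$ at position $i$ and $W[i,n]$ is the global suffix of $W$ at position $i$. *)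

(* Defs.v *)
From mathcomp Require Import all_boot all_order.
Set Implicit Arguments. Unset Strict Implicit. Unset Printing Implicit Defensive.
Import Order.TTheory.
Local Open Scope order_scope.

Section Words.
Context {d : Order.disp_t} {T : finOrderType d}.

Fixpoint lex_lt (x y : seq T) : bool :=
  match x, y with
  | [::], [::] => false
  | [::], _ :: _ => true
  | _ :: _, [::] => false
  | a :: x', b :: y' => (a < b) || ((a == b) && lex_lt x' y')
  end.

Definition lex_le (x y : seq T) : bool := (x == y) || lex_lt x y.

Definition conjugate (x y : seq T) : Prop :=
  exists p q : seq T, x = p ++ q /\ y = q ++ p.

Definition primitive (w : seq T) : Prop :=
  forall (v : seq T) (m : nat), w = flatten (nseq m v) -> m = 1%N.

Definition lyndon (w : seq T) : Prop :=
  w <> [::] /\ primitive w /\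
  forall v, conjugate w v -> v <> w -> lex_lt w v.

Definition lyndon_factorization (W : seq T) (Ls : seq (seq T)) : Prop :=
  flatten Ls = W /\ (forall L, L \in Ls -> lyndon L) /\
  (forall i, (i.+1 < size Ls)%N -> lex_le (nth [::] Ls i.+1) (nth [::] Ls i)).

(* W[i, j] with 1-based positions: a_i ... a_j *)
Definition subword (W : seq T) (i j : nat) : seq T := drop i.-1 (take j W).

End Words.

(* Main.v *)
Require Import Defs.
From mathcomp Require Import all_boot all_order.
From mathcomp Require Import zify.
Set Implicit Arguments. Unset Strict Implicit. Unset Printing Implicit Defensive.
Import Order.TTheory.

Section Aux.
Context {d : Order.disp_t} {T : finOrderType d}.
Local Open Scope order_scope.
Implicit Types x y z p q t w a b L H Y : seq T.
Implicit Types ls rest : seq (seq T).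

Lemma lex_lt_irr x : lex_lt x x = false.
Proof. by elim: x => //= a x ->; rewrite ltxx eqxx. Qed.

Lemma lex_lt_trans x y z : lex_lt x y -> lex_lt y z -> lex_lt x z.
Proof.
elim: x y z => [|a x IH] [|b y] [|c z] //=.
case/orP => [ab|/andP[/eqP-> xy]]; case/orP => [bc|/andP[/eqP<- yz]].
- by rewrite (lt_trans ab bc).
- by rewrite ab.
- by rewrite bc.
- by rewrite eqxx (IH _ _ xy yz) orbT.
Qed.

Lemma lex_lt_asym x y : lex_lt x y -> lex_lt y x = false.
Proof.
move=> h; apply/negbTE/negP => h2.
by have := lex_lt_trans h h2; rewrite lex_lt_irr.
Qed.

Lemma lex_lt_total x y : x != y -> lex_lt x y || lex_lt y x.
Proof.
elim: x y => [|a x IH] [|b y] //=.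
case: (ltgtP a b) => [ab|ba|<-] //=.
rewrite eqseq_cons eqxx /= => h.
move: (IH _ h); by rewrite ?ltxx ?eqxx /=.
Qed.

Lemma lex_le_trans x y z : lex_le x y -> lex_le y z -> lex_le x z.
Proof.
rewrite /lex_le; case/orP=>[/eqP->//|xy]; case/orP=>[/eqP<-|yz].
  by rewrite xy orbT.
by rewrite (lex_lt_trans xy yz) orbT.
Qed.

Lemma lex_lt_cases x y : lex_lt x y ->
  (exists w, w != [::] /\ y = x ++ w) \/ (forall a b, lex_lt (x ++ a) (y ++ b)).
Proof.
elim: x y => [|a x IH] [|b y] //=.
  by move=> _; left; exists (b :: y).
case/orP => [ab|/andP[/eqP<- /IH [[w [wn ->]]|H]]].
- by right => a' b' /=; rewrite ab.
- by left; exists w.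
- by right => a' b' /=; rewrite eqxx H orbT.
Qed.

Lemma lex_lt_catl t a b : lex_lt (t ++ a) (t ++ b) = lex_lt a b.
Proof. by elim: t => //= c t ->; rewrite ltxx eqxx. Qed.

Lemma lex_le_catl t a b : lex_le (t ++ a) (t ++ b) = lex_le a b.
Proof. by rewrite /lex_le lex_lt_catl eqseq_cat // eqxx. Qed.

Lemma lex_le_nil x : lex_le [::] x.
Proof. by case: x. Qed.

Lemma lex_lt_ext a w : w != [::] -> lex_lt a (a ++ w).
Proof.
move=> wn; have := lex_lt_catl a [::] w; rewrite cats0 => ->.
by case: w wn.
Qed.

Lemma lex_le_cat a b c : lex_le a b -> lex_le a (b ++ c).
Proof.
rewrite /lex_le; case/orP=>[/eqP->|h].
  case: c => [|c0 c]; first by rewrite cats0 eqxx.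
  by rewrite lex_lt_ext // orbT.
case: (lex_lt_cases h) => [[w [wn ->]]|H].
  by rewrite -catA lex_lt_ext ?orbT //; case: w wn.
by have := H [::] c; rewrite cats0 => ->; rewrite orbT.
Qed.

Lemma lex_lt_samesize p q a b : size p = size q -> lex_lt p q ->
  lex_lt (p ++ a) (q ++ b).
Proof.
move=> s /lex_lt_cases [[w [wn e]]|H] //.
have := f_equal size e; rewrite size_cat s.
by case: w wn {e} => //= c w _; lia.
Qed.

Lemma commute_pow n p t : (size p + size t <= n)%N -> p ++ t = t ++ p ->
  exists v k l, p = flatten (nseq k v) /\ t = flatten (nseq l v).
Proof.
elim: n p t => [|n IH] p t.
  move=> hs _; have : (size p + size t == 0)%N by lia.
  rewrite addn_eq0 !size_eq0 => /andP[/eqP-> /eqP->].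
  by exists [::], 0%N, 0%N.
wlog hpt: p t / (size p <= size t)%N.
  move=> H hs e; case: (leqP (size p) (size t)) => h; first exact: H.
  have [|v [a [b [h1 h2]]]] := H t p (ltnW h) _ (esym e); first by rewrite addnC.
  by exists v, b, a.
move=> hs e.
case: (eqVneq p [::]) => [->|pn].
  by exists t, 0%N, 1%N => /=; rewrite cats0.
have ep : take (size p) t = p.
  by have := f_equal (take (size p)) e; rewrite take_size_cat // takel_cat.
set t' := drop (size p) t.
have et : t = p ++ t' by rewrite -{1}(cat_take_drop (size p) t) ep.
have e' : p ++ t' = t' ++ p.
  have := f_equal (drop (size p)) e.
  by rewrite et -catA !drop_size_cat.
have hp0 : (0 < size p)%N by rewrite lt0n size_eq0.
have hs' : (size p + size t' <= n)%N.
  move: hs; rewrite {1}et size_cat; lia.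
have [v [a [b [h1 h2]]]] := IH _ _ hs' e'.
exists v, a, (a + b)%N; split => //.
by rewrite et nseqD flatten_cat -h1 -h2.
Qed.

Lemma prim_nocommute L p t : primitive L -> L = p ++ t -> p ++ t = t ++ p ->
  p != [::] -> t != [::] -> False.
Proof.
move=> Hpr EL e pn tn.
have [v [a [b [hp ht]]]] := commute_pow (leqnn _) e.
have := Hpr v (a + b)%N; rewrite EL nseqD flatten_cat -hp -ht => /(_ erefl).
move: pn tn; rewrite hp ht.
by case: a {hp} => [|a]; case: b {ht} => [|b] //= _ _; lia.
Qed.

Lemma lyndon_suffix L n : lyndon L -> (n < size L)%N -> lex_le L (drop n L).
Proof.
move=> [Ln [Hpr Hc]] hn.
case: n hn => [|n] hn; first by rewrite drop0 /lex_le eqxx.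
set p := take n.+1 L; set t := drop n.+1 L.
have EL : L = p ++ t by rewrite cat_take_drop.
have pn : p != [::] by rewrite -size_eq0 size_takel // ltnW.
have tn : t != [::].
  by rewrite -size_eq0 size_drop subn_eq0 -ltnNge.
have Hc1 : t ++ p <> L -> lex_lt L (t ++ p).
  by move=> h; apply: Hc => //; exists p, t.
have contra X : lex_lt X L -> (X <> L -> lex_lt L X) -> False.
  move=> h1 h2; have ne : X <> L by move=> e; rewrite e lex_lt_irr in h1.
  by have := lex_lt_asym (h2 ne); rewrite h1.
case: (boolP (lex_le L t)) => // hle.
have tL : lex_lt t L.
  move: hle; rewrite /lex_le negb_or => /andP[ne nlt].
  by have := lex_lt_total ne; rewrite (negbTE nlt).
exfalso.
case: (lex_lt_cases tL) => [[q [qn Eq]]|H].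
- have sq : size q = size p.
    have := f_equal size Eq; rewrite {1}EL !size_cat; lia.
  have Hc2 : q ++ t <> L -> lex_lt L (q ++ t).
    by move=> h; apply: Hc => //; exists t, q.
  case: (eqVneq p q) => [epq|npq].
    apply: (prim_nocommute Hpr EL _ pn tn).
    by rewrite -EL {1}Eq epq.
  case/orP: (lex_lt_total npq) => h.
    by apply: (contra (t ++ p)) => //; rewrite {1}Eq lex_lt_catl.
  apply: (contra (q ++ t)) => //.
  by rewrite {1}EL; apply: lex_lt_samesize.
- have h1 := H p [::]; rewrite cats0 in h1.
  exact: (contra (t ++ p)).
Qed.

Definition good (H x : seq T) := forall n, (n < size x)%N -> lex_le H (drop n x).

Lemma good_drop H x m : good H x -> good H (drop m x).
Proof.
move=> g n hn; rewrite drop_drop; apply: g; rewrite size_drop in hn; lia.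
Qed.

Lemma good_flatten H ls :
  (forall L, L \in ls -> lyndon L /\ lex_le H L) -> good H (flatten ls).
Proof.
elim: ls => [|L ls IH] hl n //=.
rewrite size_cat drop_cat; case: ifP => hn1 hn.
  have [ly hH] := hl L (mem_head _ _).
  by apply: lex_le_cat; exact: lex_le_trans hH (lyndon_suffix ly hn1).
apply: IH.
  by move=> L' h; apply: hl; rewrite in_cons h orbT.
move/negbT: hn1; rewrite -leqNgt => hn1; lia.
Qed.

Definition Rl (a b : seq T) := lex_le b a.

Lemma key rest : pairwise Rl rest -> (forall L, L \in rest -> lyndon L) ->
  forall x Y, good (head [::] rest) x -> lex_le (flatten rest) Y ->
  lex_le (flatten rest) (x ++ Y).
Proof.
elim: rest => [|L2 rest IH] /=; first by move=> *; exact: lex_le_nil.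
move=> /andP[hall hpw] hly x Y g hY.
have ly2 : lyndon L2 by apply: hly; rewrite mem_head.
have hly' : forall L, L \in rest -> lyndon L.
  by move=> L h; apply: hly; rewrite in_cons h orbT.
have hhd : lex_le (head [::] rest) L2.
  move: hall; case: (rest) => [|L3 r'] /=; first by move=> _; exact: lex_le_nil.
  by case/andP.
have IH' := IH hpw hly'.
have Z'Z : lex_le (flatten rest) (L2 ++ flatten rest).
  apply: IH'; last by rewrite /lex_le eqxx.
  by move=> n hn; apply: lex_le_trans hhd (lyndon_suffix ly2 hn).
case: (eqVneq x [::]) => [->|xn]; first by [].
have h0 : lex_le L2 x.
  by have := g 0%N; rewrite drop0; apply; rewrite lt0n size_eq0.
case/orP: h0 => [/eqP <-| hlt].
  by rewrite lex_le_catl; exact: lex_le_trans Z'Z hY.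
case: (lex_lt_cases hlt) => [[p [pn Ex]]|H].
  rewrite Ex -catA lex_le_catl; apply: IH'; last exact: lex_le_trans Z'Z hY.
  move=> n hn; apply: lex_le_trans hhd _.
  have := g (n + size L2)%N; rewrite Ex -drop_drop drop_size_cat //; apply.
  rewrite size_cat; lia.
by apply/orP; right; apply: H.
Qed.

Lemma lexM y x z : (size y < size x)%N ->
  (forall w, x = y ++ w -> ~~ lex_lt (w ++ z) z) ->
  lex_lt x y = lex_lt (x ++ z) (y ++ z).
Proof.
elim: y x => [|b y IH] [|a x] //= hs H.
  by apply/esym/negbTE; exact: (H (a :: x) erefl).
case: (eqVneq a b) => [eab|nab]; last by [].
rewrite (IH x hs) // => w e.
by apply: H; rewrite e eab.
Qed.

End Aux.

Theorem theorem2 (d : Order.disp_t) (T : finOrderType d) (W : seq T)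
    (Ls : seq (seq T)) (r s : nat) :
  W <> [::] ->
  lyndon_factorization W Ls ->
  (1 <= r)%N -> (r <= s)%N -> (s <= size Ls)%N ->
  let firstu := (size (flatten (take r.-1 Ls))).+1 in
  let lastu := size (flatten (take s Ls)) in
  forall i j : nat, (firstu <= i)%N -> (i < j)%N -> (j <= lastu)%N ->
    (lex_lt (subword W i lastu) (subword W j lastu) <->
     lex_lt (subword W i (size W)) (subword W j (size W))).
Proof.
move=> Wn [HW [Hly Hsort]] r1 rs sLs firstu lastu i j hi hij hj.
have i1 : (0 < i)%N := leq_trans (ltn0Sn _) hi.
have pw : pairwise Rl Ls.
  rewrite -sorted_pairwise; last first.
    by move=> b a c h1 h2; exact: lex_le_trans h2 h1.
  by apply/(sortedP [::]) => k hk; exact: Hsort k hk.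
set F := flatten (take s Ls); set z := flatten (drop s Ls).
have EW : W = F ++ z by rewrite -HW -flatten_cat cat_take_drop.
have -> : lastu = size F by [].
rewrite /subword take_size EW take_size_cat // !drop_cat.
have hjF : (j <= size F)%N := hj.
have -> : (i.-1 < size F)%N by lia.
have -> : (j.-1 < size F)%N by lia.
have gF : good (head [::] (drop s Ls)) F.
  apply: good_flatten => L hL; split; first by apply: Hly; exact: mem_take hL.
  case Ed: (drop s Ls) => [|H' rest] /=; first exact: lex_le_nil.
  have := pw; rewrite -(cat_take_drop s Ls) pairwise_cat => /and3P[hrel _ _].
  have hH' : H' \in drop s Ls by rewrite Ed mem_head.
  exact: (allrelP hrel L H' hL hH').
have pwd : pairwise Rl (drop s Ls).
  by have := pw; rewrite -{1}(cat_take_drop s Ls) pairwise_cat => /and3P[_ _ ->].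
rewrite (@lexM _ _ (drop j.-1 F) (drop i.-1 F) z) //.
  rewrite !size_drop; lia.
move=> w e.
have gw : good (head [::] (drop s Ls)) w.
  have := f_equal (drop (size (drop j.-1 F))) e.
  rewrite drop_size_cat // drop_drop => <-; exact: good_drop.
have hly2 : forall L, L \in drop s Ls -> lyndon L.
  by move=> L h; apply: Hly; exact: mem_drop h.
have zz : lex_le z z by rewrite /lex_le eqxx.
have hk := @key _ _ (drop s Ls) pwd hly2 w z gw zz.
by case/orP: hk => [/eqP ez|h]; [rewrite -ez lex_lt_irr | rewrite lex_lt_asym].
Qed.
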